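(* A ring $R$ is von Neumann regular if and only if for every right $R$-module $E$ and any two submodules $A,B\subseteq E$ that are f-injective, the submodule $A\cap B$ is f-injective.
   Context: Rings are associative with identity; modules are unitary right modules. A right $R$-module $M$ is f-injective if for every finitely generated right ideal $I$ of $R$ and every $R$-homomorphism $f:I\to M$ there is an $R$-homomorphism $\bar f:R\to M$ with $\bar f|_I=f$. *)

(* Defs.v *)
(* Rings: associative with identity (pzRingType, possibly
   non-commutative; the zero ring is allowed). Right R-modules are given by an
   additive abelian group E (zmodType) with a right action act : E -> R -> E. *)
From HB Require Import structures.
From mathcomp Require Import all_boot all_order all_algebra.
Set Implicit Arguments. Unset Strict Implicit. Unset Printing Implicit Defensive.
Import GRing.Theory.
Local Open Scope ring_scope.

Definition von_neumann_regular (R : pzRingType) : Prop :=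
  forall a : R, exists x : R, a = a * x * a.

Definition rmod_axioms (R : pzRingType) (E : zmodType) (act : E -> R -> E) : Prop :=
  [/\ forall (x y : E) (r : R), act (x + y) r = act x r + act y r,
      forall (x : E) (r s : R), act x (r + s) = act x r + act x s,
      forall (x : E) (r s : R), act x (r * s) = act (act x r) s
    & forall x : E, act x 1 = x].

Definition submodule (R : pzRingType) (E : zmodType) (act : E -> R -> E)
    (A : E -> Prop) : Prop :=
  [/\ A 0, forall x y, A x -> A y -> A (x - y)
    & forall x r, A x -> A (act x r)].

Definition fg_right_ideal (R : pzRingType) (a : seq R) (x : R) : Prop :=
  exists rs : seq R, size rs = size a /\
    x = \sum_(i < size a) a`_i * rs`_i.

(* the submodule A of E is f-injective: every R-homomorphism f from a
   finitely generated right ideal I into A extends to an R-homomorphism R -> A.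
   (Finitely generated right ideals are exactly the fg_right_ideal a.) *)
Definition f_injective (R : pzRingType) (E : zmodType) (act : E -> R -> E)
    (A : E -> Prop) : Prop :=
  forall (a : seq R) (f : R -> E),
    (forall x, fg_right_ideal a x -> A (f x)) ->
    (forall x y, fg_right_ideal a x -> fg_right_ideal a y -> f (x + y) = f x + f y) ->
    (forall x r, fg_right_ideal a x -> f (x * r) = act (f x) r) ->
    exists g : R -> E,
      [/\ forall x, A (g x),
          forall x y, g (x + y) = g x + g y,
          forall x r, g (x * r) = act (g x) r
        & forall x, fg_right_ideal a x -> g x = f x].

(* Main.v *)
Require Import Defs.
From HB Require Import structures.
From mathcomp Require Import all_boot all_order all_algebra.
From Stdlib Require Import Classical ClassicalEpsilon FunctionalExtensionality PropExtensionality ProofIrrelevance.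
Set Implicit Arguments. Unset Strict Implicit. Unset Printing Implicit Defensive.
Import Order.TTheory GRing.Theory Num.Theory.
Local Open Scope ring_scope.


Definition fr (x : rat) : rat := x - (Num.floor x)%:~R.

Lemma fr_ge0 x : 0 <= fr x.
Proof. by rewrite /fr subr_ge0 Num.Theory.floor_le. Qed.
Lemma fr_lt1 x : fr x < 1.
Proof. have := Num.Theory.floorD1_gt x; rewrite intrD /fr ltrBlDl; by rewrite addrC. Qed.
Lemma frDz x (k : int) : fr (x + k%:~R) = fr x.
Proof.
rewrite /fr Num.Theory.floorDrz ?intr_int // Num.Theory.intrKfloor intrD.
by rewrite opprD addrACA subrr addr0.
Qed.

Lemma fr_id x : 0 <= x < 1 -> fr x = x.
Proof.
move=> hx; rewrite /fr (_ : Num.floor x = 0) ?subr0 //.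
by apply: Num.Theory.floor_def; rewrite add0r.
Qed.

Lemma frB x : fr x = x + (- Num.floor x)%:~R.
Proof. by rewrite /fr intrN. Qed.

Lemma frDl x y : fr (fr x + y) = fr (x + y).
Proof. by rewrite [fr x]frB addrAC frDz. Qed.
Lemma frDr x y : fr (x + fr y) = fr (x + y).
Proof. by rewrite addrC frDl addrC. Qed.

Definition QZ := {q : rat | (0 <= q) && (q < 1)}.
Lemma frP x : (0 <= fr x) && (fr x < 1).
Proof. by rewrite fr_ge0 fr_lt1. Qed.
Definition qz (x : rat) : QZ := exist _ (fr x) (frP x).
Definition qz_add (a b : QZ) : QZ := qz (val a + val b).
Definition qz_opp (a : QZ) : QZ := qz (- val a).
Definition qz_zero : QZ := qz 0.
Lemma qz_val_eq (a b : QZ) : val a = val b -> a = b.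
Proof. exact: val_inj. Qed.
Lemma fr_val (a : QZ) : fr (val a) = val a.
Proof. by apply: fr_id; case: a. Qed.

Lemma qz_addA : associative qz_add.
Proof. by move=> a b c; apply: val_inj => /=; rewrite frDl frDr addrA. Qed.
Lemma qz_addC : commutative qz_add.
Proof. by move=> a b; apply: val_inj => /=; rewrite addrC. Qed.
Lemma qz_add0 : left_id qz_zero qz_add.
Proof. by move=> a; apply: val_inj => /=; rewrite frDl add0r fr_val. Qed.
Lemma qz_addN : left_inverse qz_zero qz_opp qz_add.
Proof. by move=> a; apply: val_inj => /=; rewrite frDl addNr. Qed.

HB.instance Definition _ := [isSub for (fun x : QZ => sval x)].
HB.instance Definition _ := [Choice of QZ by <:].
HB.instance Definition _ := GRing.isZmodule.Build QZ qz_addA qz_addC qz_add0 qz_addN.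

Lemma qz_valD (a b : QZ) : val (a + b) = fr (val a + val b).
Proof. by []. Qed.
Lemma qz_val0 : val (0 : QZ) = 0.
Proof. by rewrite /= fr_id // lexx ltr01. Qed.
Lemma qz_valMn (a : QZ) n : val (a *+ n) = fr (val a *+ n).
Proof.
elim: n => [|n IH]; first by rewrite !mulr0n qz_val0 fr_id // lexx ltr01.
by rewrite !mulrS qz_valD IH frDr.
Qed.

Lemma qz_div (d : QZ) (n : nat) : (0 < n)%N -> exists e : QZ, e *+ n = d.
Proof.
move=> n0; have nR : (0 : rat) < n%:R by rewrite ltr0n.
have hd := svalP d; case/andP: hd => d0 d1.
have h0 : 0 <= sval d / n%:R by rewrite divr_ge0 // ltW.
have h1 : sval d / n%:R < 1.
  rewrite ltr_pdivrMr // mul1r; apply: lt_le_trans d1 _.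
  by rewrite ler1n.
exists (qz (sval d / n%:R)); apply: val_inj.
rewrite qz_valMn /= [fr (sval d / _)]fr_id ?h0 ?h1 // -[(sval d / _) *+ n]mulr_natr divfK ?gt_eqF //.
exact: fr_val d.
Qed.

Lemma qz_order (n : nat) : (1 < n)%N ->
  exists e : QZ, e != 0 /\ e *+ n = 0.
Proof.
move=> n1; have n0 : (0 < n)%N by apply: ltn_trans n1.
have nR : (0 : rat) < n%:R by rewrite ltr0n.
have h0 : 0 <= (n%:R)^-1 :> rat by rewrite invr_ge0 ltW.
have h1 : (n%:R)^-1 < 1 :> rat by rewrite invf_lt1 // ltr1n.
exists (qz (n%:R)^-1); split.
  apply/negP => /eqP/(congr1 val); rewrite qz_val0 /= fr_id ?h0 ?h1 //.
  by move/eqP; rewrite invr_eq0 pnatr_eq0 => /eqP n00; rewrite n00 in n0.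
apply: val_inj; rewrite qz_valMn qz_val0 /= [fr (_^-1)]fr_id ?h0 ?h1 //.
rewrite -[_ *+ n]mulr_natr mulVf ?gt_eqF //.
Qed.


Definition cdec (P : Prop) : bool :=
  if excluded_middle_informative P then true else false.
Lemma cdecP (P : Prop) : reflect P (cdec P).
Proof. by rewrite /cdec; case: excluded_middle_informative => h; constructor. Qed.

Definition sg (G : zmodType) (P : G -> Prop) :=
  P 0 /\ forall x y, P x -> P y -> P (x - y).

Lemma sgN (G : zmodType) (P : G -> Prop) x : sg P -> P x -> P (- x).
Proof. by case=> P0 PB Px; rewrite -sub0r; apply: PB. Qed.
Lemma sgD (G : zmodType) (P : G -> Prop) x y : sg P -> P x -> P y -> P (x + y).
Proof. move=> sP Px Py; rewrite -[y]opprK; apply: sP.2 => //; exact: sgN. Qed.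
Lemma sgMn (G : zmodType) (P : G -> Prop) x n : sg P -> P x -> P (x *+ n).
Proof.
move=> sP Px; elim: n => [|n IH]; first by rewrite mulr0n; case: sP.
by rewrite mulrS; apply: sgD.
Qed.
Lemma sgMz (G : zmodType) (P : G -> Prop) x k : sg P -> P x -> P (x *~ k).
Proof.
move=> sP Px; case: k => n; first by rewrite -pmulrn; exact: sgMn.
by rewrite NegzE mulrNz; apply: sgN => //; rewrite -pmulrn; exact: sgMn.
Qed.

Lemma int_sg (P : int -> Prop) : sg P ->
  (forall k, P k -> k = 0) \/
  exists n : nat, [/\ (0 < n)%N, P n%:Z & forall k, P k -> exists q, k = q * n%:Z].
Proof.
move=> sP.
case: (classic (exists k, P k /\ k <> 0)) => [[k [Pk k0]]|nex]; last first.
  by left=> k Pk; apply: NNPP => h; apply: nex; exists k.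
right.
have ex : exists m, cdec ((0 < m)%N /\ P m%:Z).
  exists `|k|%N; apply/cdecP; split; first by rewrite absz_gt0; apply/eqP.
  case: (ler0P k) => hk.
    by rewrite -abszN gez0_abs ?oppr_ge0 //; apply: sgN.
  by rewrite gtz0_abs.
case: (ex_minnP ex) => n /cdecP [n0 Pn] nmin.
exists n; split => // j Pj.
exists (j %/ n%:Z)%Z.
have nz : n%:Z != 0 by rewrite eqz_nat -lt0n.
have r0 := modz_ge0 j nz.
have rn : (j %% n%:Z)%Z < n%:Z by apply: ltz_pmod; rewrite ltz_nat.
have Pr : P (j %% n%:Z)%Z.
  have -> : (j %% n%:Z)%Z = j - (j %/ n%:Z)%Z * n%:Z.
    by rewrite {2}(divz_eq j n%:Z) addrC addKr.
  apply: sP.2 => //; rewrite -mulrzz mulrzz mulrC -mulrzz.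
  exact: sgMz.
case: (eqVneq (j %% n%:Z)%Z 0) => r00; first by rewrite {1}(divz_eq j n%:Z) r00 addr0.
exfalso.
have : (n <= `|(j %% n%:Z)%Z|%N)%N.
  apply: nmin; apply/cdecP; split; first by rewrite absz_gt0.
  by rewrite gez0_abs.
rewrite leqNgt; move/negP; apply.
by rewrite -ltz_nat gez0_abs.
Qed.


Section BW.
Variables (T : Type) (le : T -> T -> Prop).
Hypothesis Rrefl : forall x, le x x.
Hypothesis Rtrans : forall x y z, le x y -> le y z -> le x z.
Hypothesis Ranti : forall x y, le x y -> le y x -> x = y.
Definition chain (C : T -> Prop) := forall x y, C x -> C y -> le x y \/ le y x.
Variable sup : (T -> Prop) -> T.
Hypothesis sup_ub : forall C, chain C -> forall y, C y -> le y (sup C).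
Hypothesis sup_least : forall C b, chain C -> (forall y, C y -> le y b) -> le (sup C) b.
Variable f : T -> T.
Hypothesis f_infl : forall x, le x (f x).

Inductive tower : T -> Prop :=
| tw_f x : tower x -> tower (f x)
| tw_sup C : (forall y, C y -> tower y) -> chain C -> tower (sup C).

Definition extreme c := forall x, tower x -> le x c -> x <> c -> le (f x) c.

Lemma lemma1 c : extreme c -> forall x, tower x -> le x c \/ le (f c) x.
Proof.
move=> ec x; elim=> {x} [y ty IHy | C tC IH chC].
- case: IHy => [yc|fy].
    case: (classic (y = c)) => [->|ne]; first by right; apply: Rrefl.
    by left; apply: ec.
  right. exact (Rtrans fy (f_infl y)).
- case: (classic (exists y, C y /\ le (f c) y)) => [[y [Cy h]]|nex].
    by right; apply: (Rtrans h (sup_ub chC Cy)).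
  left; apply: sup_least => // y Cy; case: (IH y Cy) => // h.
  by case: nex; exists y.
Qed.

Lemma all_extreme c : tower c -> extreme c.
Proof.
elim=> {c} [d td IH | C tC IH chC].
- move=> x tx xfd ne; case: (lemma1 IH tx) => [xd|fdx].
    case: (classic (x = d)) => [->|nxd]; first by apply: Rrefl.
    by apply: (Rtrans (IH x tx xd nxd) (f_infl d)).
  by case: ne; apply: Ranti.
- move=> x tx xs ne.
  case: (classic (exists z, C z /\ ~ le z x)) => [[z [Cz nzx]]|nex]; last first.
    case: ne; apply: Ranti => //; apply: sup_least => // z Cz.
    by apply: NNPP => h; apply: nex; exists z.
  case: (lemma1 (IH z Cz) tx) => [xz|fzx]; last first.
    by case: nzx; apply: (Rtrans (f_infl z) fzx).
  case: (classic (x = z)) => [exz|nxz]; first by case: nzx; rewrite exz; apply: Rrefl.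
  by apply: (Rtrans (IH z Cz x tx xz nxz) (sup_ub chC Cz)).
Qed.

Lemma tower_chain : chain tower.
Proof.
move=> x y tx ty; case: (lemma1 (all_extreme ty) tx) => [h|h]; first by left.
by right; apply: (Rtrans (f_infl y) h).
Qed.

Theorem BW : exists m, f m = m.
Proof.
exists (sup tower).
have ts : tower (sup tower) by apply: tw_sup => //; apply: tower_chain.
apply: Ranti; last by apply: f_infl.
by apply: (sup_ub tower_chain); apply: tw_f.
Qed.
End BW.

Section Ext.
Variables (G D : zmodType).

Definition addon (P : G -> Prop) (h : G -> D) :=
  forall x y, P x -> P y -> h (x + y) = h x + h y.

Lemma addon0 P h : sg P -> addon P h -> h 0 = 0.
Proof.
case=> P0 _ ah; have := ah 0 0 P0 P0; rewrite addr0.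
by move/(congr1 (fun v => v - h 0)); rewrite subrr addrK => ->.
Qed.
Lemma addonN P h x : sg P -> addon P h -> P x -> h (- x) = - h x.
Proof.
move=> sP ah Px; have := ah x (- x) Px (sgN sP Px).
rewrite subrr (addon0 sP ah) => /eqP; rewrite eq_sym addr_eq0 => /eqP ->.
by rewrite opprK.
Qed.
Lemma addonB P h x y : sg P -> addon P h -> P x -> P y -> h (x - y) = h x - h y.
Proof. by move=> sP ah Px Py; rewrite ah ?(addonN sP ah) //; exact: sgN. Qed.
Lemma addonMn P h x n : sg P -> addon P h -> P x -> h (x *+ n) = h x *+ n.
Proof.
move=> sP ah Px; elim: n => [|n IH]; first by rewrite !mulr0n (addon0 sP ah).
by rewrite !mulrS ah ?IH //; exact: sgMn.
Qed.
Lemma addonMz P h x k : sg P -> addon P h -> P x -> h (x *~ k) = h x *~ k.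
Proof.
move=> sP ah Px; case: k => n; first by rewrite -!pmulrn (addonMn n sP ah Px).
have Pm : P (x *~ (n.+1)%:Z) by rewrite -pmulrn; exact: sgMn.
by rewrite NegzE !mulrNz (addonN sP ah Pm) -!pmulrn (addonMn _ sP ah Px).
Qed.

Hypothesis Ddiv : forall (d : D) (n : nat), (0 < n)%N -> exists e, e *+ n = d.

Lemma compat P h x0 : sg P -> addon P h ->
  exists d, forall k, P (x0 *~ k) -> d *~ k = h (x0 *~ k).
Proof.
move=> sP ah.
have sK : sg (fun k => P (x0 *~ k)).
  split; first by rewrite mulr0z; case: sP.
  by move=> a b Pa Pb; rewrite mulrzBr; apply: sP.2.
case: (int_sg sK) => [K0|[n [n0 Pn Kn]]].
  by exists 0 => k /K0 ->; rewrite !mulr0z (addon0 sP ah).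
case: (Ddiv (h (x0 *~ n%:Z)) n0) => d hd.
exists d => k /Kn [q ->].
by rewrite mulrC !mulrzA (addonMz _ sP ah Pn) -[d *~ _]pmulrn hd.
Qed.

Definition span1 (P : G -> Prop) x0 y := exists z k, P z /\ y = z + x0 *~ k.

Lemma sg_span1 P x0 : sg P -> sg (span1 P x0).
Proof.
move=> sP; split; first by exists 0, 0; rewrite mulr0z addr0; split => //; case: sP.
move=> x y [z [k [Pz ->]]] [z' [k' [Pz' ->]]].
exists (z - z'), (k - k'); split; first by apply: sP.2.
by rewrite mulrzBr opprD addrACA.
Qed.

Lemma onestep P h x0 d : sg P -> addon P h ->
  (forall k, P (x0 *~ k) -> d *~ k = h (x0 *~ k)) ->
  exists h', [/\ addon (span1 P x0) h', (forall z, P z -> h' z = h z),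
     h' x0 = d & forall y, ~ span1 P x0 y -> h' y = 0].
Proof.
move=> sP ah hd.
pose V y v := (exists z k, [/\ P z, y = z + x0 *~ k & v = h z + d *~ k])
              \/ (~ span1 P x0 y /\ v = 0).
have Vex : forall y, exists v, V y v.
  move=> y; case: (classic (span1 P x0 y)) => [[z [k [Pz ey]]]|ns].
    by exists (h z + d *~ k); left; exists z, k.
  by exists 0; right.
pose h' y := epsilon (inhabits 0) (V y).
have h'V y : V y (h' y) by apply: epsilon_spec; exact: Vex.
have key : forall z k, P z -> h' (z + x0 *~ k) = h z + d *~ k.
  move=> z k Pz; case: (h'V (z + x0 *~ k)) => [[z1 [k1 [Pz1 e ->]]]|[ns _]]; last first.
    by case: ns; exists z, k.
  have e2 : x0 *~ (k - k1) = z1 - z.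
    by rewrite mulrzBr -[z1](addrK (x0 *~ k1)) -e addrAC [z + _]addrC addrK.
  have := hd (k - k1); rewrite e2 => /(_ (sP.2 _ _ Pz1 Pz)).
  rewrite (addonB sP ah Pz1 Pz) mulrzBr => E.
  by rewrite -[h z1](addrNK (h z)) -E addrAC addrNK addrC.
exists h'; split.
- move=> x y [z [k [Pz ->]]] [z' [k' [Pz' ->]]].
  rewrite addrACA -mulrzDr !key //; last by apply: sgD.
  by rewrite ah // mulrzDr addrACA.
- by move=> z Pz; have := key z 0 Pz; rewrite mulr0z !addr0.
- have P0 : P 0 by case: sP.
  by have := key 0 1 P0; rewrite mulr1z (addon0 sP ah) !add0r mulr1z.
- move=> y ns; case: (h'V y) => [[z [k [Pz ey _]]]|[_ ->]] //.
  by case: ns; exists z, k.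
Qed.
End Ext.

Section Extend.
Variables (G D : zmodType).
Hypothesis Ddiv : forall (d : D) (n : nat), (0 < n)%N -> exists e, e *+ n = d.
Variables (I : G -> Prop) (h0 : G -> D).
Hypotheses (sI : sg I) (ah0 : addon I h0).

Record pext := PExt {
  dom : G -> Prop; fn : G -> D;
  p_sg : sg dom; p_I : forall x, I x -> dom x; p_add : addon dom fn;
  p_ext : forall x, I x -> fn x = h0 x; p_out : forall x, ~ dom x -> fn x = 0 }.

Definition ple (p q : pext) :=
  (forall x, dom p x -> dom q x) /\ (forall x, dom p x -> fn q x = fn p x).

Lemma ple_refl p : ple p p. Proof. by split. Qed.
Lemma ple_trans p q r : ple p q -> ple q r -> ple p r.
Proof.
move=> [d1 f1] [d2 f2]; split; first by move=> x /d1 /d2.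
by move=> x dx; rewrite f2 ?f1 //; apply: d1.
Qed.
Lemma ple_anti p q : ple p q -> ple q p -> p = q.
Proof.
move=> [d1 f1] [d2 f2].
have ed : dom p = dom q.
  by apply: functional_extensionality => x; apply: propositional_extensionality; split; [apply: d1|apply: d2].
have ef : fn p = fn q.
  apply: functional_extensionality => x.
  case: (classic (dom p x)) => h; first by rewrite f1.
  rewrite !p_out //; by rewrite -ed.
case: p q ed ef {d1 f1 d2 f2} => [dp fp a1 a2 a3 a4 a5] [dq fq b1 b2 b3 b4 b5] /= ed ef.
subst; f_equal; apply: proof_irrelevance.
Qed.

Definition bot_fn x := if cdec (I x) then h0 x else 0.
Lemma bot_proof : [/\ sg I, (forall x, I x -> I x), addon I bot_fn,
   (forall x, I x -> bot_fn x = h0 x) & (forall x, ~ I x -> bot_fn x = 0)].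
Proof.
rewrite /bot_fn; split => //.
- move=> x y Ix Iy; have Ixy := sgD sI Ix Iy.
  by do 3 (case: cdecP => //= _); apply: ah0.
- by move=> x Ix; case: cdecP.
- by move=> x nI; case: cdecP.
Qed.
Definition pbot : pext :=
  let: And5 a b c d e := bot_proof in PExt a b c d e.
Lemma pbot_le p : ple pbot p.
Proof.
rewrite /pbot; case: bot_proof => a b c d e; split => /= x Ix; first exact: p_I.
by rewrite p_ext // /bot_fn; case: cdecP.
Qed.

Lemma sup_exists (C : pext -> Prop) : chain ple C ->
  exists s, (forall y, C y -> ple y s) /\ (forall b, (forall y, C y -> ple y b) -> ple s b).
Proof.
move=> chC.
pose C' p := C p \/ p = pbot.
have chC' : chain ple C'.
  move=> p q [Cp|->] [Cq|->]; [exact: chC | right; exact: pbot_le | left; exact: pbot_le | left; exact: ple_refl].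
pose D' x := exists p, C' p /\ dom p x.
pose V x v := (exists p, [/\ C' p, dom p x & fn p x = v]) \/ (~ D' x /\ v = 0).
have Vex x : exists v, V x v.
  case: (classic (D' x)) => [[p [C'p dx]]|nD]; first by exists (fn p x); left; exists p.
  by exists 0; right.
pose fn' x := epsilon (inhabits 0) (V x).
have fnV x : V x (fn' x) by apply: epsilon_spec; exact: Vex.
have val p x : C' p -> dom p x -> fn' x = fn p x.
  move=> C'p dx; case: (fnV x) => [[q [C'q dqx <-]]|[nD _]]; last by case: nD; exists p.
  by case: (chC' p q C'p C'q) => [[_ f]|[_ f]]; rewrite f.
have two x y : D' x -> D' y -> exists p, [/\ C' p, dom p x & dom p y].
  move=> [p [C'p dx]] [q [C'q dy]].
  case: (chC' p q C'p C'q) => [[d _]|[d _]]; first by exists q; split => //; apply: d.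
  by exists p; split => //; apply: d.
have Cbot : C' pbot by right.
have a1 : sg D'.
  split; first by exists pbot; split => //; rewrite /pbot; case: bot_proof => ? ? ? ? ? /=; case: sI.
  move=> x y Dx Dy; case: (two x y Dx Dy) => p [C'p dx dy].
  by exists p; split => //; apply: (p_sg p).2.
have a2 : forall x, I x -> D' x by move=> x Ix; exists pbot; split => //; apply: p_I.
have a3 : addon D' fn'.
  move=> x y Dx Dy; case: (two x y Dx Dy) => p [C'p dx dy].
  by rewrite !(val p) ?p_add //; apply: sgD => //; apply: p_sg.
have a4 : forall x, I x -> fn' x = h0 x.
  by move=> x Ix; rewrite (val pbot) //; [apply: p_ext | apply: p_I].
have a5 : forall x, ~ D' x -> fn' x = 0.
  move=> x nD; case: (fnV x) => [[q [C'q dqx _]]|[_ ->]] //.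
  by case: nD; exists q.
exists (PExt a1 a2 a3 a4 a5); split.
- move=> y Cy; split => /= x dx; first by exists y; split => //; left.
  by apply: val => //; left.
- move=> b ub; split => /= x [p [C'p dx]].
    by case: C'p => [Cp|ep]; [apply: (ub p Cp).1 | subst p; apply: (pbot_le b).1].
  rewrite (val p) //.
  by case: C'p => [Cp|ep]; [apply: (ub p Cp).2 | subst p; apply: (pbot_le b).2].
Qed.

Lemma step_exists p : exists q, ple p q /\
  ((exists x, ~ dom p x) -> exists x, ~ dom p x /\ dom q x).
Proof.
case: (classic (exists x, ~ dom p x)) => [[x0 nx0]|nex]; last first.
  by exists p; split; [exact: ple_refl | move=> h; case: nex].
have sP := p_sg p; have aP := @p_add p.
case: (compat Ddiv x0 sP aP) => d hd.
case: (onestep sP aP hd) => h' [b1 b2 b3 b4].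
have c1 := sg_span1 x0 sP.
have c2 : forall x, I x -> span1 (dom p) x0 x.
  by move=> x Ix; exists x, 0; rewrite mulr0z addr0; split => //; apply: p_I.
have c4 : forall x, I x -> h' x = h0 x.
  by move=> x Ix; rewrite b2 ?p_ext //; apply: p_I.
exists (PExt c1 c2 b1 c4 b4); split.
  split => /= x dx; last exact: b2.
  by exists x, 0; rewrite mulr0z addr0.
move=> _; exists x0; split => //=; exists 0, 1.
split; [by case: sP | by rewrite mulr1z add0r].
Qed.

Theorem EXT : exists H : G -> D, (forall x y, H (x + y) = H x + H y) /\
  (forall x, I x -> H x = h0 x).
Proof.
pose sup C := epsilon (inhabits pbot) (fun s =>
   chain ple C -> (forall y, C y -> ple y s) /\ (forall b, (forall y, C y -> ple y b) -> ple s b)).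
have supS C : chain ple C -> (forall y, C y -> ple y (sup C)) /\
    (forall b, (forall y, C y -> ple y b) -> ple (sup C) b).
  move=> chC.
  have ex : exists s, chain ple C -> (forall y, C y -> ple y s) /\ (forall b, (forall y, C y -> ple y b) -> ple s b).
    by case: (sup_exists chC) => s hs; exists s.
  exact: (epsilon_spec _ _ ex chC).
pose f p := epsilon (inhabits p) (fun q => ple p q /\
  ((exists x, ~ dom p x) -> exists x, ~ dom p x /\ dom q x)).
have fS p : ple p (f p) /\ ((exists x, ~ dom p x) -> exists x, ~ dom p x /\ dom (f p) x).
  exact: (epsilon_spec _ _ (step_exists p)).
have [m fm] : exists m, f m = m.
  apply: (@BW pext ple ple_refl ple_trans ple_anti sup).
  - by move=> C chC y Cy; apply: (supS C chC).1.
  - by move=> C b chC ub; apply: (supS C chC).2.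
  - by move=> x; apply: (fS x).1.
have tot : forall x, dom m x.
  move=> x; apply: NNPP => nx.
  case: (fS m).2; first by exists x.
  by move=> y [ny]; rewrite fm.
exists (fn m); split; first by move=> x y; apply: p_add.
exact: p_ext.
Qed.
End Extend.

Lemma separate (G D : zmodType)
  (Ddiv : forall (d : D) (n : nat), (0 < n)%N -> exists e, e *+ n = d)
  (Dord : forall n : nat, (1 < n)%N -> exists e : D, e != 0 /\ e *+ n = 0)
  (L : G -> Prop) (x : G) : sg L -> ~ L x ->
  exists H : G -> D, [/\ forall a b, H (a + b) = H a + H b,
     forall a, L a -> H a = 0 & H x != 0].
Proof.
move=> sL nLx.
have a0 : addon L (fun _ : G => 0 : D) by move=> ? ? _ _; rewrite addr0.
have sK : sg (fun k => L (x *~ k)).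
  split; first by rewrite mulr0z; case: sL.
  by move=> a b Pa Pb; rewrite mulrzBr; apply: sL.2.
have [d [dn0 hd]] : exists d : D, d != 0 /\ forall k, L (x *~ k) -> d *~ k = 0.
  case: (int_sg sK) => [K0|[n [n0 Pn Kn]]].
    case: (Dord 2%N erefl) => e [e0 _]; exists e; split => // k /K0 ->.
    by rewrite mulr0z.
  have n1 : (1 < n)%N.
    rewrite ltn_neqAle n0 andbT; apply/eqP => e1; apply: nLx.
    by move: Pn; rewrite -e1 mulr1z.
  case: (Dord n n1) => e [e0 he]; exists e; split => // k /Kn [q ->].
  by rewrite mulrC mulrzA -pmulrn he mul0rz.
case: (onestep sL a0 (d := d) (x0 := x)) => [k /hd ->//|h' [b1 b2 b3 b4]].
case: (EXT Ddiv (sg_span1 x sL) b1) => H [aH eH].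
exists H; split => //.
- by move=> a La; rewrite eH ?b2 //; exists a, 0; rewrite mulr0z addr0.
- rewrite eH ?b3 //; exists 0, 1; split; [by case: sL | by rewrite mulr1z add0r].
Qed.


Section FG.
Variable R : pzRingType.

Lemma fg_nil (x : R) : fg_right_ideal [::] x <-> x = 0.
Proof.
split; first by case=> rs [_ ->]; rewrite big_ord0.
by move=> ->; exists [::]; split => //; rewrite big_ord0.
Qed.

Lemma fg_cons (a : R) s x : fg_right_ideal (a :: s) x <->
  exists r y, fg_right_ideal s y /\ x = a * r + y.
Proof.
split.
  case=> [[|r rs]] [//= /eqP]; rewrite eqSS => /eqP hs ->.
  exists r, (\sum_(i < size s) s`_i * rs`_i); split; first by exists rs.
  by rewrite big_ord_recl.
case=> r [y [[rs [hs ->]] ->]]; exists (r :: rs); split; first by rewrite /= hs.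
by rewrite big_ord_recl.
Qed.

Lemma fg0 s : fg_right_ideal s (0 : R).
Proof.
elim: s => [|a s IH]; first by apply/fg_nil.
by apply/fg_cons; exists 0, 0; rewrite mulr0 addr0.
Qed.

Lemma fgB s (x y : R) : fg_right_ideal s x -> fg_right_ideal s y -> fg_right_ideal s (x - y).
Proof.
elim: s x y => [|a s IH] x y.
  by move=> /fg_nil -> /fg_nil ->; apply/fg_nil; rewrite subr0.
move=> /fg_cons [r [x' [hx ->]]] /fg_cons [r' [y' [hy ->]]].
apply/fg_cons; exists (r - r'), (x' - y'); split; first exact: IH.
by rewrite mulrBr opprD addrACA.
Qed.

Lemma fgD s (x y : R) : fg_right_ideal s x -> fg_right_ideal s y -> fg_right_ideal s (x + y).
Proof.
move=> hx hy; rewrite -[y]opprK -[- y]add0r; apply: fgB => //.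
exact: fgB (fg0 s) hy.
Qed.

Lemma fgM s (x r : R) : fg_right_ideal s x -> fg_right_ideal s (x * r).
Proof.
elim: s x => [|a s IH] x; first by move=> /fg_nil ->; apply/fg_nil; rewrite mul0r.
move=> /fg_cons [r1 [x' [hx ->]]]; apply/fg_cons; exists (r1 * r), (x' * r).
by split; [exact: IH | rewrite mulrDl mulrA].
Qed.
End FG.

Lemma vnr_unit (R : pzRingType) : von_neumann_regular R ->
  forall s, exists e : R, fg_right_ideal s e /\ forall x, fg_right_ideal s x -> e * x = x.
Proof.
move=> vnr; elim=> [|a s [e [Ie He]]].
  by exists 0; split; [exact: fg0 | move=> x /fg_nil ->; rewrite mulr0].
set c := a - e * a; case: (vnr c) => y hy.
set f := c * y; set u := e + f - f * e.
have Is x : fg_right_ideal s x -> fg_right_ideal (a :: s) x.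
  by move=> hx; apply/fg_cons; exists 0, x; rewrite mulr0 add0r.
have If : fg_right_ideal (a :: s) f.
  apply/fg_cons; exists y, (- (e * (a * y))); split.
    by rewrite -sub0r; apply: fgB; [exact: fg0 | exact: fgM].
  by rewrite /f /c mulrBl -mulrA.
exists u; split.
  by apply: fgB; [apply: fgD => //; exact: Is | exact: fgM].
move=> x /fg_cons [r [z [Iz ->]]].
have uz : u * z = z by rewrite /u !mulrDl mulNr -mulrA He // addrK.
have ua : u * a = a.
  rewrite /u !mulrDl mulNr -mulrA -addrA -mulrBr -/c /f -hy.
  by rewrite /c addrC subrK.
by rewrite mulrDr mulrA ua uz.
Qed.

Lemma vnr_finj (R : pzRingType) (E : zmodType) (act : E -> R -> E) (C : E -> Prop) :
  von_neumann_regular R -> f_injective act C.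
Proof.
move=> vnr s f fC fD fM.
case: (vnr_unit vnr s) => u [Iu Hu].
exists (fun x => f (u * x)); split.
- by move=> x; apply: fC; exact: fgM.
- by move=> x y; rewrite mulrDr fD //; exact: fgM.
- by move=> x r; rewrite mulrA fM //; exact: fgM.
- by move=> x Ix; rewrite Hu.
Qed.

Definition ceq (T : Type) (x y : T) : bool := cdec (x = y).
Lemma ceqP (T : Type) : Equality.axiom (@ceq T).
Proof. by move=> x y; apply: cdecP. Qed.

Definition cfind (T : Type) (P : pred T) (n : nat) : option T :=
  match excluded_middle_informative (exists x, P x) with
  | left h => Some (proj1_sig (constructive_indefinite_description _ h))
  | right _ => None
  end.
Lemma cfind_some (T : Type) (P : pred T) n x : cfind P n = Some x -> P x.
Proof.
rewrite /cfind; case: excluded_middle_informative => // h [<-].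
exact: proj2_sig (constructive_indefinite_description _ h).
Qed.
Lemma cfind_ex (T : Type) (P : pred T) : (exists x, P x) -> exists n, cfind P n.
Proof. by move=> h; exists 0%N; rewrite /cfind; case: excluded_middle_informative. Qed.
Lemma cfind_ext (T : Type) (P Q : pred T) : P =1 Q -> cfind P =1 cfind Q.
Proof. by move=> e; have -> : P = Q by apply: functional_extensionality. Qed.

Definition addmap (G D : zmodType) := {phi : G -> D | forall x y, phi (x + y) = phi x + phi y}.

HB.instance Definition _ (G D : zmodType) := hasDecEq.Build (addmap G D) (@ceqP _).
HB.instance Definition _ (G D : zmodType) :=
  hasChoice.Build (addmap G D) (@cfind_some _) (@cfind_ex _) (@cfind_ext _).

Section AddMap.
Variables (G D : zmodType).
Local Notation F := (addmap G D).

Lemma am_eq (a b : F) : (forall x, sval a x = sval b x) -> a = b.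
Proof.
case: a b => [fa pa] [fb pb] /= e.
have ef := functional_extensionality _ _ e; subst.
by f_equal; apply: proof_irrelevance.
Qed.

Lemma am_zero_proof (x y : G) : (0 : D) = 0 + 0. Proof. by rewrite addr0. Qed.
Definition am_zero : F := exist (fun phi : G -> D => forall x y, phi (x + y) = phi x + phi y) (fun _ => 0) am_zero_proof.
Lemma am_add_proof (a b : F) x y :
  sval a (x + y) + sval b (x + y) = (sval a x + sval b x) + (sval a y + sval b y).
Proof. by rewrite (svalP a) (svalP b) addrACA. Qed.
Definition am_add (a b : F) : F := exist _ (fun x => sval a x + sval b x) (am_add_proof a b).
Lemma am_opp_proof (a : F) x y : - sval a (x + y) = - sval a x + - sval a y.
Proof. by rewrite (svalP a) opprD. Qed.
Definition am_opp (a : F) : F := exist _ (fun x => - sval a x) (am_opp_proof a).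

Lemma am_addA : associative am_add.
Proof. by move=> a b c; apply: am_eq => x /=; rewrite addrA. Qed.
Lemma am_addC : commutative am_add.
Proof. by move=> a b; apply: am_eq => x /=; rewrite addrC. Qed.
Lemma am_add0 : left_id am_zero am_add.
Proof. by move=> a; apply: am_eq => x /=; rewrite add0r. Qed.
Lemma am_addN : left_inverse am_zero am_opp am_add.
Proof. by move=> a; apply: am_eq => x /=; rewrite addNr. Qed.

HB.instance Definition _ := GRing.isZmodule.Build F am_addA am_addC am_add0 am_addN.

Lemma am_valD (a b : F) x : sval (a + b) x = sval a x + sval b x. Proof. by []. Qed.
Lemma am_val0 x : sval (0 : F) x = 0. Proof. by []. Qed.
Lemma am_valN (a : F) x : sval (- a) x = - sval a x. Proof. by []. Qed.
Lemma am_valB (a b : F) x : sval (a - b) x = sval a x - sval b x. Proof. by []. Qed.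
End AddMap.

Section Module.
Variables (R : pzRingType) (D : zmodType).
Local Notation F := (addmap R D).

Lemma amact_proof (a : F) (r : R) x y : sval a (r * (x + y)) = sval a (r * x) + sval a (r * y).
Proof. by rewrite mulrDr (svalP a). Qed.
Definition amact (a : F) (r : R) : F := exist _ (fun s => sval a (r * s)) (amact_proof a r).

Lemma amact_val a r s : sval (amact a r) s = sval a (r * s). Proof. by []. Qed.

Lemma amact_axioms : rmod_axioms amact.
Proof.
split.
- by move=> x y r; apply: am_eq.
- by move=> x r s; apply: am_eq => t /=; rewrite mulrDl (svalP x).
- by move=> x r s; apply: am_eq => t /=; rewrite mulrA.
- by move=> x; apply: am_eq => t /=; rewrite mul1r.
Qed.

Definition pact (e : F * F) (r : R) : F * F := (amact e.1 r, amact e.2 r).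

Lemma pact_axioms : rmod_axioms pact.
Proof.
case: amact_axioms => a1 a2 a3 a4; split.
- by move=> [x1 x2] [y1 y2] r; rewrite /pact /= a1 a1.
- by move=> [x1 x2] r s; rewrite /pact /= a2 a2.
- by move=> [x1 x2] r s; rewrite /pact /= a3 a3.
- by move=> [x1 x2]; rewrite /pact /= a4 a4.
Qed.

Definition graph (psi : F -> F) (e : F * F) : Prop := e.2 = psi e.1.

Lemma graph_sub (psi : F -> F) :
  (forall x y, psi (x - y) = psi x - psi y) ->
  (forall x r, psi (amact x r) = amact (psi x) r) ->
  submodule pact (graph psi).
Proof.
move=> pB pM; have p0 : psi 0 = 0 by have := pB 0 0; rewrite !subrr.
split; first by rewrite /graph /= p0.
- by move=> [x1 x2] [y1 y2]; rewrite /graph /= => -> ->; rewrite pB.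
- by move=> [x1 x2] r; rewrite /graph /= => ->; rewrite pM.
Qed.

Hypothesis Ddiv : forall (d : D) (n : nat), (0 < n)%N -> exists e, e *+ n = d.

Lemma graph_finj (psi : F -> F) :
  (forall x y, psi (x + y) = psi x + psi y) ->
  (forall x r, psi (amact x r) = amact (psi x) r) ->
  f_injective pact (graph psi).
Proof.
move=> pD pM s f fC fD fM.
pose h0 x := sval (f x).1 1.
have sI : sg (fg_right_ideal s) by split; [exact: fg0 | move=> x y; exact: fgB].
have ah0 : addon (fg_right_ideal s) h0.
  by move=> x y Ix Iy; rewrite /h0 fD.
case: (EXT Ddiv sI ah0) => H [aH eH].
have g1p x a b : H (x * (a + b)) = H (x * a) + H (x * b) by rewrite mulrDr aH.
pose g1 x : F := exist _ (fun s => H (x * s)) (g1p x).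
exists (fun x => (g1 x, psi (g1 x))); split.
- by move=> x.
- move=> x y; have -> : g1 (x + y) = g1 x + g1 y.
    by apply: am_eq => t /=; rewrite mulrDl aH.
  by rewrite pD.
- move=> x r; have -> : g1 (x * r) = amact (g1 x) r.
    by apply: am_eq => t /=; rewrite mulrA.
  by rewrite pM.
- move=> x Ix; have e1 : g1 x = (f x).1.
    apply: am_eq => t /=; rewrite eH; last exact: fgM.
    by rewrite /h0 fM //= mulr1.
  by have := fC x Ix; rewrite /graph e1; case: (f x) => a b /= ->.
Qed.
End Module.

Lemma fg1 (R : pzRingType) (a x : R) : fg_right_ideal [:: a] x <-> exists r, x = a * r.
Proof.
split.
  by move=> /fg_cons [r [y [/fg_nil -> ->]]]; exists r; rewrite addr0.
by case=> r ->; apply/fg_cons; exists r, 0; rewrite addr0; split => //; exact: fg0.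
Qed.

Lemma converse (R : pzRingType) :
  (forall (E : zmodType) (act : E -> R -> E), rmod_axioms act ->
   forall A B : E -> Prop,
     submodule act A -> submodule act B ->
     f_injective act A -> f_injective act B ->
     f_injective act (fun x => A x /\ B x)) -> von_neumann_regular R.
Proof.
move=> Hyp a; apply: NNPP => nex.
pose L0 (y : R) := exists u v, y = u * a + v /\ a * v = 0.
have sL : sg L0.
  split; first by exists 0, 0; rewrite mul0r addr0 mulr0.
  move=> x y [u [v [-> av]]] [u' [v' [-> av']]].
  exists (u - u'), (v - v'); split; first by rewrite mulrBl opprD addrACA.
  by rewrite mulrBr av av' subrr.
have nL1 : ~ L0 1.
  move=> [u [v [e av]]]; apply: nex; exists u.
  by rewrite -{1}(mulr1 a) e mulrDr av addr0 mulrA.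
case: (separate qz_div qz_order sL nL1) => h0 [aH h0L h01].
pose F := addmap R QZ.
pose phi0 : F := exist _ h0 aH.
have psip (p : F) x y : sval p ((x + y) * a) = sval p (x * a) + sval p (y * a).
  by rewrite mulrDl (svalP p).
pose psi (p : F) : F := exist _ (fun s => sval p (s * a)) (psip p).
pose psi0 (p : F) : F := 0.
have sub0 : submodule (@pact R QZ) (graph psi0).
  by apply: graph_sub => [x y|x r]; rewrite /psi0 ?subr0 //; apply: am_eq.
have psiB x y : psi (x - y) = psi x - psi y by apply: am_eq.
have psiD x y : psi (x + y) = psi x + psi y by apply: am_eq.
have psiM x r : psi (amact x r) = amact (psi x) r by apply: am_eq => t /=; rewrite mulrA.
have sub1 : submodule (@pact R QZ) (graph psi) by apply: graph_sub.
have fi0 : f_injective (@pact R QZ) (graph psi0).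
  by apply: graph_finj; [exact: qz_div | move=> *; rewrite /psi0 addr0 | move=> x r; apply: am_eq].
have fi1 : f_injective (@pact R QZ) (graph psi) by apply: graph_finj => //; exact: qz_div.
have := Hyp _ (@pact R QZ) (@pact_axioms R QZ) _ _ sub0 sub1 fi0 fi1.
move=> fi.
pose pick (x : R) := epsilon (inhabits 0) (fun r => x = a * r).
have pickS x : fg_right_ideal [:: a] x -> x = a * pick x.
  by move=> /fg1 ex; apply: (epsilon_spec (inhabits 0) (fun r => x = a * r) ex).
have same p q : a * p = a * q -> amact phi0 p = amact phi0 q.
  move=> epq; apply: am_eq => t /=.
  have Lv : L0 ((p - q) * t) by exists 0, ((p - q) * t); rewrite mul0r add0r mulrA mulrBr epq subrr mul0r.
  apply/eqP; rewrite -subr_eq0; apply/eqP.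
  by rewrite -(addonB (P := fun _ => True)) // -?mulrBl ?h0L //; split.
have actD p q : amact phi0 (p + q) = amact phi0 p + amact phi0 q.
  by apply: am_eq => t /=; rewrite mulrDl aH.
pose fdef (x : R) : F * F := (amact phi0 (pick x), 0).
case: (fi [:: a] fdef).
- move=> x Ix; split; first by [].
  rewrite /graph /=; apply: am_eq => t /=; rewrite h0L //.
  by exists (pick x * t), 0; rewrite addr0 mulr0 mulrA.
- move=> x y Ix Iy; rewrite /fdef /=.
  transitivity ((amact phi0 (pick x) + amact phi0 (pick y), 0 + 0) : F * F); last by [].
  rewrite addr0; congr (_, _).
  rewrite -actD; apply: same; rewrite mulrDr -pickS -?pickS //.
  exact: fgD.
- move=> x r Ix; rewrite /fdef /pact /=; congr (_, _); last by apply: am_eq.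
  have -> : amact (amact phi0 (pick x)) r = amact phi0 (pick x * r).
    by case: (@amact_axioms R QZ) => _ _ a3 _; rewrite a3.
  by apply: same; rewrite mulrA -!pickS //; exact: fgM.
move=> g [gC gD gM gE].
have [g0 gpsi] := gC 1.
have ga : g a = fdef a by apply: gE; apply/fg1; exists 1; rewrite mulr1.
have := gM 1 a; rewrite mul1r ga => /(congr1 (fun e => sval e.1 1)) /=.
rewrite !mulr1.
have e : sval (g 1).1 a = 0.
  move: gpsi; rewrite /graph g0 => /(congr1 (fun p => sval p 1)) /=.
  by rewrite mul1r => <-.
rewrite e => hp.
set p := pick a in hp.
have ap : a = a * p by apply: pickS; apply/fg1; exists 1; rewrite mulr1.
have L1p : L0 (1 - p) by exists 0, (1 - p); rewrite mul0r add0r mulrBr mulr1 -ap subrr.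
move: h01; rewrite -(subrK p 1) aH hp h0L // add0r eqxx //.
Qed.

Theorem mainTheorem2 (R : pzRingType) :
  von_neumann_regular R <->
  (forall (E : zmodType) (act : E -> R -> E), rmod_axioms act ->
   forall A B : E -> Prop,
     submodule act A -> submodule act B ->
     f_injective act A -> f_injective act B ->
     f_injective act (fun x => A x /\ B x)).
Proof.
split; last exact: converse.
by move=> vnr E act _ A B _ _ _ _; apply: vnr_finj.
Qed.
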